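(* Let $(V,\varphi,\xi,\eta,g)$ be as in the context and let $\mathcal{F}$ be the space of tensors defined there. The operators $p_1,p_2,p_3,p_4:\mathcal{F}\to\mathcal{F}$ satisfy: (i) $p_i\circ p_i=p_i$ for $i=1,2,3,4$; (ii) $p_1+p_2+p_3+p_4=\mathrm{id}$; (iii) $p_i\circ p_j=0$ for $i\neq j$. Moreover each $p_i$ commutes with the action of the group $G$, i.e. $p_i(\lambda(a)F)=\lambda(a)(p_iF)$ for all $a\in G$, $F\in\mathcal{F}$.
   Context: Let $V$ be a real vector space of dimension $2n+1$ with an endomorphism $\varphi$, a vector $\xi$ and a linear form $\eta$ such that $\varphi\xi=0$, $\eta\circ\varphi=0$, $\eta(\xi)=1$, $\varphi^2=\mathrm{id}-\eta\otimes\xi$, and such that $\varphi$ restricted to $\mathbb{D}=\ker\eta$ has eigenvalues $\pm1$ with eigenspaces of equal dimension $n$. Let $g$ be a nondegenerate symmetric bilinear form (pseudo-Euclidean metric) on $V$ with $g(\varphi X,\varphi Y)=-g(X,Y)+\eta(X)\eta(Y)$; then $\eta(X)=g(X,\xi)$. Write $hX=X-\eta(X)\xi\in\mathbb{D}$. Fix a basis $\{e_1,\dots,e_{2n}\}$ of $\mathbb{D}$ and write $Y=Y^ie_i+\eta(Y)\xi$ (summation over $i=1,\dots,2n$). Let $\mathcal{F}$ be the vector space of all $(0,3)$-tensors $F$ on $V$ of the form $F(X,Y,Z)=Y^ig(\mathcal{A}_{e_i}X,Z)+\eta(Y)g(\mathcal{A}_\xi X,\varphi Z)$, where $\mathcal{A}_{e_i}:V\to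 V$ ($i=1,\dots,2n$) and $\mathcal{A}_\xi:V\to\mathbb{D}$ are linear maps satisfying, for all $X\in V$ and all $i,j$: $g(\mathcal{A}_{e_i}X,e_j)=-g(\mathcal{A}_{e_j}X,e_i)$; $\mathcal{A}_{\varphi e_i}X=-\varphi(\mathcal{A}_{e_i}X)-g(\mathcal{A}_\xi X,e_i)\xi$ (with $\mathcal{A}_{\varphi e_i}$ defined by linearity in the index); $\eta(\mathcal{A}_{e_i}X)=-g(\mathcal{A}_\xi X,\varphi e_i)$; $\eta(\mathcal{A}_\xi X)=0$. Let $G$ be the group of linear automorphisms $a$ of $V$ with $a\varphi=\varphi a$, $a\xi=\xi$, $\eta\circ a=\eta$, $g(aX,aY)=g(X,Y)$ (the structure group $\mathbb{U}(n,\mathbb{R})\times\mathrm{Id}$), acting on $\mathcal{F}$ by $(\lambda(a)F)(X,Y,Z)=F(a^{-1}X,a^{-1}Y,a^{-1}Z)$. Define $p_1(F)(X,Y,Z)=F(hX,hY,hZ)$; $p_2(F)(X,Y,Z)=-\eta(Y)F(hX,hZ,\xi)+\eta(Z)F(hX,hY,\xi)$; $p_3(F)(X,Y,Z)=\eta(X)F(\xi,hY,hZ)$; $p_4(F)(X,Y,Z)=\eta(X)\eta(Y)F(\xi,\xi,hZ)-\eta(X)\eta(Z)F(\xi,\xi,hY)$. *)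

(* Defs.v *)
From HB Require Import structures.
From mathcomp Require Import all_boot all_order all_algebra.
From mathcomp Require Import vector reals.
Set Implicit Arguments. Unset Strict Implicit. Unset Printing Implicit Defensive.
Import Order.TTheory GRing.Theory Num.Theory.
Local Open Scope ring_scope.

Definition tensor (R : realType) (V : vectType R) := V -> V -> V -> R.

Definition hproj (R : realType) (V : vectType R) (xi : V) (eta : 'Hom(V, R^o))
  (X : V) : V := X - (eta X : R) *: xi.

(* almost paracontact-type structure (phi, xi, eta) on V with dim V = 2n+1,
   phi|_D having eigenvalues +-1 with n-dimensional eigenspaces, D = ker eta *)
Definition structure_ok (R : realType) (V : vectType R) (n : nat)
  (phi : 'End(V)) (xi : V) (eta : 'Hom(V, R^o)) : Prop :=
  [/\ \dim {:V} = n.*2.+1,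
      phi xi = 0,
      (forall X, eta (phi X) = 0 :> R),
      eta xi = 1 :> R &
      (forall X, phi (phi X) = X - (eta X : R) *: xi)] /\
  (\dim (passmx.leigenspace phi 1 :&: lker eta)%VS = n /\
   \dim (passmx.leigenspace phi (-1) :&: lker eta)%VS = n).

Definition metric_ok (R : realType) (V : vectType R)
  (phi : 'End(V)) (eta : 'Hom(V, R^o)) (g : V -> V -> R) : Prop :=
  [/\ (forall (a : R) x y z, g (a *: x + y) z = a * g x z + g y z),
      (forall x y, g x y = g y x),
      (forall x, (forall y, g x y = 0) -> x = 0) &
      (forall X Y, g (phi X) (phi Y) = - g X Y + (eta X : R) * (eta Y : R))].

(* The space F: tensors of the form
   F(X,Y,Z) = Y^i g(A_{e_i} X, Z) + eta(Y) g(A_xi X, phi Z),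
   where Y = Y^i e_i + eta(Y) xi, i.e. Y^i = coord e i (h Y). *)
Definition inF (R : realType) (V : vectType R) (n : nat)
  (phi : 'End(V)) (xi : V) (eta : 'Hom(V, R^o)) (g : V -> V -> R)
  (e : (n.*2).-tuple V) (F : tensor V) : Prop :=
  exists (A : 'I_(n.*2) -> 'End(V)) (Axi : 'End(V)),
  [/\ (forall X, Axi X \in lker eta),
      (forall X (i j : 'I_(n.*2)),
          g (A i X) (tnth e j) = - g (A j X) (tnth e i)),
      (forall X (i : 'I_(n.*2)),
          (* A_{phi e_i} defined by linearity in the index *)
          (\sum_(j < n.*2) coord e j (phi (tnth e i)) *: A j)%R X
            = - phi (A i X) - g (Axi X) (tnth e i) *: xi),
      (forall X (i : 'I_(n.*2)),
          (eta (A i X) : R) = - g (Axi X) (phi (tnth e i))) &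
      (forall X, (eta (Axi X) : R) = 0)] /\
      (forall X Y Z, F X Y Z =
          \sum_(i < n.*2) coord e i (hproj xi eta Y) * g (A i X) Z
          + (eta Y : R) * g (Axi X) (phi Z)).

Section Projs.
Variables (R : realType) (V : vectType R) (xi : V) (eta : 'Hom(V, R^o)).
Local Notation h := (hproj xi eta).
Local Notation et X := (eta X : R).

Definition p1 (F : tensor V) : tensor V := fun X Y Z => F (h X) (h Y) (h Z).
Definition p2 (F : tensor V) : tensor V := fun X Y Z =>
  - et Y * F (h X) (h Z) xi + et Z * F (h X) (h Y) xi.
Definition p3 (F : tensor V) : tensor V := fun X Y Z => et X * F xi (h Y) (h Z).
Definition p4 (F : tensor V) : tensor V := fun X Y Z =>
  et X * et Y * F xi xi (h Z) - et X * et Z * F xi xi (h Y).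

(* p_k, k = 0..3 standing for p_1..p_4 *)
Definition pr (k : 'I_4) : tensor V -> tensor V :=
  match val k with 0 => p1 | 1 => p2 | 2 => p3 | _ => p4 end.
End Projs.

Definition inG (R : realType) (V : vectType R)
  (phi : 'End(V)) (xi : V) (eta : 'Hom(V, R^o)) (g : V -> V -> R)
  (a : 'End(V)) : Prop :=
  [/\ (forall X, a (phi X) = phi (a X)),
      a xi = xi,
      (forall X, eta (a X) = eta X) &
      (forall X Y, g (a X) (a Y) = g X Y)].

(* (lambda(a) F)(X,Y,Z) = F(a^{-1}X, a^{-1}Y, a^{-1}Z), given ainv = a^{-1} *)
Definition lam (R : realType) (V : vectType R) (ainv : 'End(V))
  (F : tensor V) : tensor V := fun X Y Z => F (ainv X) (ainv Y) (ainv Z).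

(* Main.v *)
Require Import Defs.
From HB Require Import structures.
From mathcomp Require Import all_boot all_order all_algebra.
From mathcomp Require Import vector reals.
From mathcomp Require Import ring.
Import Order.TTheory GRing.Theory Num.Theory.
Local Open Scope ring_scope.

Section MK.
Variables (R : realType) (V : vectType R) (f : V -> V) (fL : linear f).
Definition fL' := f.
HB.instance Definition _ := GRing.isLinear.Build R V V *:%R fL' fL.
Definition mkEnd : 'End(V) := linfun fL'.
Lemma mkEndE x : mkEnd x = f x. Proof. exact: lfunE. Qed.
End MK.

Section Main.
Variables (R : realType) (V : vectType R) (n : nat) (phi : 'End(V)) (xi : V)
  (eta : 'Hom(V, R^o)) (g : V -> V -> R) (e : (n.*2).-tuple V).
Hypotheses (phixi : phi xi = 0) (etaphi : forall X, eta (phi X) = 0 :> R)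
  (etaxi : eta xi = 1 :> R)
  (phi2 : forall X, phi (phi X) = X - (eta X : R) *: xi).
Hypotheses (glin : forall (a : R) x y z, g (a *: x + y) z = a * g x z + g y z)
  (gsym : forall x y, g x y = g y x)
  (gphi : forall X Y, g (phi X) (phi Y) = - g X Y + (eta X : R) * (eta Y : R)).
Hypothesis (be : basis_of (lker eta) e).

Local Notation h := (hproj xi eta).

Lemma etaZ a x : (eta (a *: x) : R) = a * eta x.
Proof. by rewrite linearZ. Qed.
Lemma etaD x y : (eta (x + y) : R) = eta x + eta y.
Proof. by rewrite linearD. Qed.
Lemma etaB x y : (eta (x - y) : R) = eta x - eta y.
Proof. by rewrite linearB. Qed.
Lemma eta0 : (eta 0 : R) = 0.
Proof. by rewrite linear0. Qed.

Lemma eta_h X : (eta (h X) : R) = 0.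
Proof. by rewrite /hproj etaB etaZ etaxi mulr1 subrr. Qed.
Lemma h_h X : h (h X) = h X.
Proof. by rewrite {1}/hproj eta_h scale0r subr0. Qed.
Lemma h_xi : h xi = 0.
Proof. by rewrite /hproj etaxi scale1r subrr. Qed.
Lemma h_lin : linear h.
Proof.
move=> a x y; rewrite /hproj etaD etaZ scalerDl -scalerA scalerBr.
by rewrite addrACA opprD.
Qed.
Definition hE := mkEnd R V h.
Lemma hEE x : hE x = h x. Proof. exact: (@mkEndE R V h h_lin x). Qed.
Lemma decomp X : X = (eta X : R) *: xi + h X.
Proof. by rewrite /hproj addrC subrK. Qed.
Lemma phi_h X : phi (h X) = phi X.
Proof. rewrite /hproj linearB linearZ /=. set u := phi xi. have -> : u = 0 by exact: phixi. by rewrite scaler0 subr0. Qed.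
Lemma h_phi X : h (phi X) = phi X.
Proof. by rewrite /hproj etaphi scale0r subr0. Qed.

Lemma gDl x y z : g (x + y) z = g x z + g y z.
Proof. by have := glin 1 x y z; rewrite scale1r mul1r. Qed.
Lemma g0l z : g 0 z = 0.
Proof.
have H := gDl 0 0 z; rewrite addr0 in H.
by apply: (@addrI _ (g 0 z)); rewrite addr0 -H.
Qed.
Lemma gZl a x z : g (a *: x) z = a * g x z.
Proof. by have := glin a x 0 z; rewrite addr0 g0l addr0. Qed.
Lemma gNl x z : g (- x) z = - g x z.
Proof. by rewrite -scaleN1r gZl mulN1r. Qed.
Lemma gBl x y z : g (x - y) z = g x z - g y z.
Proof. by rewrite gDl gNl. Qed.
Lemma gDr x y z : g z (x + y) = g z x + g z y.
Proof. by rewrite !(gsym z) gDl. Qed.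
Lemma g0r z : g z 0 = 0.
Proof. by rewrite gsym g0l. Qed.
Lemma gZr a x z : g z (a *: x) = a * g z x.
Proof. by rewrite !(gsym z) gZl. Qed.
Lemma gNr x z : g z (- x) = - g z x.
Proof. by rewrite !(gsym z) gNl. Qed.
Lemma gBr x y z : g z (x - y) = g z x - g z y.
Proof. by rewrite !(gsym z) gBl. Qed.
Lemma gsumr m (F : 'I_m -> V) x : g x (\sum_(i < m) F i) = \sum_(i < m) g x (F i).
Proof.
elim: m F => [|m IH] F; first by rewrite !big_ord0 g0r.
by rewrite !big_ord_recr /= gDr IH.
Qed.
Lemma gxi X : g X xi = eta X.
Proof.
have := gphi X xi; rewrite phixi g0r etaxi mulr1 => /eqP.
by rewrite eq_sym addrC subr_eq0 => /eqP.
Qed.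
Lemma g_h_l x z : g (h x) z = g x z - (eta x : R) * eta z.
Proof. by rewrite /hproj gBl gZl (gsym xi) gxi. Qed.
Lemma g_h_r x z : g x (h z) = g x z - (eta x : R) * eta z.
Proof. by rewrite gsym g_h_l gsym mulrC. Qed.

Lemma eta_e i : (eta (tnth e i) : R) = 0.
Proof.
have := basis_mem be (mem_tnth i e).
by rewrite memv_ker => /eqP.
Qed.
Lemma expand v : v \in lker eta -> v = \sum_i coord e i v *: tnth e i.
Proof.
move/andP: be => [/eqP Hs _]; rewrite -Hs => /coord_span {1}->.
by apply: eq_bigr => i _; rewrite (tnth_nth 0).
Qed.
Lemma h_in X : h X \in lker eta.
Proof. by rewrite memv_ker eta_h. Qed.
Lemma phi_in X : phi X \in lker eta.
Proof. by rewrite memv_ker etaphi. Qed.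
Lemma gexp w v : v \in lker eta ->
  g w (phi v) = \sum_i coord e i v * g w (phi (tnth e i)).
Proof.
move=> /expand {1}->; rewrite linear_sum gsumr.
by apply: eq_bigr => i _; rewrite linearZ gZr.
Qed.
Lemma coordP i a u v : coord e i (a *: u + v) = a * coord e i u + coord e i v.
Proof. by rewrite linearP. Qed.
Lemma coord0 i : coord e i 0 = 0.
Proof. by rewrite linear0. Qed.
Lemma etaP a u v : (eta (a *: u + v) : R) = a * eta u + eta v.
Proof. by rewrite linearP. Qed.

Section FF.
Variables (A : 'I_(n.*2) -> 'End(V)) (Axi : 'End(V)) (F : tensor V).
Hypotheses (Heta : forall X (i : 'I_(n.*2)),
          (eta (A i X) : R) = - g (Axi X) (phi (tnth e i))).
Hypothesis (HF : forall X Y Z, F X Y Z =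
          \sum_(i < n.*2) coord e i (hproj xi eta Y) * g (A i X) Z
          + (eta Y : R) * g (Axi X) (phi Z)).

Lemma FlinX a x y Y Z : F (a *: x + y) Y Z = a * F x Y Z + F y Y Z.
Proof.
rewrite !HF.
under eq_bigr => i _ do rewrite linearP glin mulrDr mulrCA.
rewrite big_split /= -mulr_sumr linearP glin. ring.
Qed.
Lemma FlinY a x y X Z : F X (a *: x + y) Z = a * F X x Z + F X y Z.
Proof.
rewrite !HF.
under eq_bigr => i _ do rewrite h_lin coordP mulrDl -mulrA.
rewrite big_split /= -mulr_sumr etaP. ring.
Qed.
Lemma FlinZ a x y X Y : F X Y (a *: x + y) = a * F X Y x + F X Y y.
Proof.
rewrite !HF.
under eq_bigr => i _ do rewrite gsym glin mulrDr mulrCA !(gsym _ (A i X)).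
rewrite big_split /= -mulr_sumr linearP gsym glin !(gsym _ (Axi X)). ring.
Qed.
Lemma zero_of (f : V -> R) : (forall x y, f (1 *: x + y) = 1 * f x + f y) -> f 0 = 0.
Proof.
move=> H; have := H 0 0; rewrite scale1r mul1r addr0 => H0.
by apply: (@addrI _ (f 0)); rewrite addr0 -H0.
Qed.
Lemma F0X Y Z : F 0 Y Z = 0.
Proof. exact: (zero_of (fun x => F x Y Z) (fun x y => FlinX 1 x y Y Z)). Qed.
Lemma FX0 X Z : F X 0 Z = 0.
Proof. exact: (zero_of (fun x => F X x Z) (fun x y => FlinY 1 x y X Z)). Qed.
Lemma FXY0 X Y : F X Y 0 = 0.
Proof. exact: (zero_of (fun x => F X Y x) (fun x y => FlinZ 1 x y X Y)). Qed.
Lemma FX X Y Z : F X Y Z = (eta X : R) * F xi Y Z + F (h X) Y Z.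
Proof. by rewrite {1}(decomp X) FlinX. Qed.
Lemma FY X Y Z : F X Y Z = (eta Y : R) * F X xi Z + F X (h Y) Z.
Proof. by rewrite {1}(decomp Y) FlinY. Qed.
Lemma FZ X Y Z : F X Y Z = (eta Z : R) * F X Y xi + F X Y (h Z).
Proof. by rewrite {1}(decomp Z) FlinZ. Qed.
Lemma Fxi2 X Z : F X xi Z = g (Axi X) (phi Z).
Proof.
rewrite HF h_xi etaxi mul1r big1 ?add0r // => i _.
by rewrite coord0 mul0r.
Qed.
Lemma Fxi3 X W : F X W xi = - g (Axi X) (phi W).
Proof.
rewrite HF.
have -> : phi xi = 0 by exact: phixi.
rewrite g0r mulr0 addr0 -phi_h (gexp _ _ (h_in W)) -sumrN.
by apply: eq_bigr => i _; rewrite gxi Heta mulrN.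
Qed.
End FF.
Lemma inF_typeA (B : 'I_(n.*2) -> 'End(V)) (G : tensor V) :
  (forall X i j, g (B i X) (tnth e j) = - g (B j X) (tnth e i)) ->
  (forall X i, exists c : R,
     (\sum_(j < n.*2) coord e j (phi (tnth e i)) *: B j) X = - phi (B i X) + c *: xi) ->
  (forall X Y Z, G X Y Z = \sum_i coord e i (h Y) * g (B i X) (h Z)) ->
  inF phi xi eta g e G.
Proof.
move=> skB phB HG.
exists (fun i => hE \o B i)%VF, 0; split; first split.
- by move=> X; rewrite zero_lfunE memv_ker linear0.
- move=> X i j; rewrite !comp_lfunE !hEE !g_h_l !eta_e !mulr0 !subr0; exact: skB.
- move=> X i /=.
  have -> : (\sum_(j < n.*2) coord e j (phi (tnth e i)) *: (hE \o B j)%VF) X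
      = hE ((\sum_(j < n.*2) coord e j (phi (tnth e i)) *: B j) X).
    rewrite !sum_lfunE linear_sum; apply: eq_bigr => j _.
    by rewrite !scale_lfunE comp_lfunE linearZ.
  have [c ->] := phB X i.
  rewrite zero_lfunE g0l scale0r subr0 comp_lfunE linearD linearN linearZ /=.
  by rewrite !hEE h_xi h_phi scaler0 addr0 phi_h.
- by move=> X i; rewrite comp_lfunE hEE eta_h zero_lfunE g0l oppr0.
- by move=> X; rewrite zero_lfunE linear0.
- move=> X Y Z; rewrite HG zero_lfunE g0l mulr0 addr0; apply: eq_bigr => i _.
  by rewrite comp_lfunE hEE g_h_l g_h_r.
Qed.

Lemma AiL (Bx : 'End(V)) (i : 'I_(n.*2)) :
  linear (fun X => (- g (Bx X) (phi (tnth e i))) *: xi).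
Proof.
move=> a x y /=; rewrite linearP glin opprD scalerDl scalerA mulrN.
by [].
Qed.

Lemma inF_typeB (Bx : 'End(V)) (G : tensor V) :
  (forall X, Bx X \in lker eta) ->
  (forall X Y Z, G X Y Z =
     (eta Y : R) * g (Bx X) (phi Z) - (eta Z : R) * g (Bx X) (phi Y)) ->
  inF phi xi eta g e G.
Proof.
move=> HB HG.
pose Ai i := mkEnd R V (fun X => (- g (Bx X) (phi (tnth e i))) *: xi).
have AiE : forall i X, Ai i X = (- g (Bx X) (phi (tnth e i))) *: xi.
  by move=> i X; exact: (@mkEndE R V _ (AiL Bx i) X).
exists Ai, Bx; split; first split.
- exact: HB.
- by move=> X i j; rewrite !AiE !gZl !(gsym xi) !gxi !eta_e !mulr0 oppr0.
- move=> X i; rewrite sum_lfunE.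
  under eq_bigr => j _ do rewrite scale_lfunE AiE scalerA.
  rewrite -scaler_suml AiE linearZ /=.
  have -> : phi xi = 0 by exact: phixi.
  rewrite scaler0 oppr0 add0r -scaleNr; congr (_ *: _).
  have E : tnth e i = phi (phi (tnth e i)) by rewrite phi2 eta_e scale0r subr0.
  rewrite [in RHS]E (gexp _ _ (phi_in _)) -sumrN.
  by apply: eq_bigr => j _; rewrite mulrN.
- by move=> X i; rewrite AiE etaZ etaxi mulr1.
- by move=> X; have := HB X; rewrite memv_ker => /eqP.
- move=> X Y Z; rewrite HG addrC; congr (_ + _).
  rewrite -phi_h (gexp _ _ (h_in Y)) mulr_sumr -sumrN; apply: eq_bigr => i _.
  by rewrite AiE gZl (gsym xi) gxi; ring.
Qed.
Lemma gphixi w : g w (phi xi) = 0.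
Proof. set u := phi xi; have -> : u = 0 by exact: phixi. exact: g0r. Qed.
Lemma scL (v : V) : linear (fun X => (eta X : R) *: v).
Proof. by move=> a x y /=; rewrite etaP scalerDl scalerA. Qed.

Lemma main_sec :
  [/\ (forall (k : 'I_4) F, inF phi xi eta g e F ->
         inF phi xi eta g e (pr xi eta k F)),
      (forall (k : 'I_4) F, inF phi xi eta g e F -> forall X Y Z,
         pr xi eta k (pr xi eta k F) X Y Z = pr xi eta k F X Y Z),
      (forall F, inF phi xi eta g e F -> forall X Y Z,
         p1 xi eta F X Y Z + p2 xi eta F X Y Z + p3 xi eta F X Y Z
           + p4 xi eta F X Y Z = F X Y Z),
      (forall (k l : 'I_4) F, k != l -> inF phi xi eta g e F ->
         forall X Y Z, pr xi eta k (pr xi eta l F) X Y Z = 0) &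
      (forall (a ainv : 'End(V)),
         (forall X, a (ainv X) = X) -> (forall X, ainv (a X) = X) ->
         inG phi xi eta g a ->
         forall (k : 'I_4) F, inF phi xi eta g e F -> forall X Y Z,
           pr xi eta k (lam ainv F) X Y Z = lam ainv (pr xi eta k F) X Y Z)].
Proof.
split.
- move=> k F [A [Axi [[HAxi Hskew Hphi Heta HAxi0] HF]]].
  case: k => [[|[|[|[|k]]]] Hk] //=; rewrite /pr /=.
  + apply: (inF_typeA (fun i => (A i \o hE)%VF)).
    * by move=> X i j /=; rewrite !comp_lfunE; exact: Hskew.
    * move=> X i; exists (- g (Axi (h X)) (tnth e i)).
      have -> : (\sum_(j < n.*2) coord e j (phi (tnth e i)) *: (A j \o hE)%VF) X
          = (\sum_(j < n.*2) coord e j (phi (tnth e i)) *: A j) (hE X).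
        by rewrite !sum_lfunE; apply: eq_bigr => j _; rewrite !scale_lfunE comp_lfunE.
      by rewrite Hphi comp_lfunE hEE scaleNr.
    * move=> X Y Z; rewrite /p1 /= HF h_h eta_h mul0r addr0.
      by apply: eq_bigr => i _; rewrite comp_lfunE hEE.
  + apply: (inF_typeB ((Axi \o hE)%VF)).
    * by move=> X; rewrite comp_lfunE; exact: HAxi.
    * move=> X Y Z; rewrite /p2 /= !(Fxi3 _ _ _ Heta HF) !comp_lfunE hEE !phi_h; ring.
  + have mE : forall i X, mkEnd R V (fun X => (eta X : R) *: A i xi) X = (eta X : R) *: A i xi.
      by move=> i X; exact: (@mkEndE R V _ (scL (A i xi)) X).
    apply: (inF_typeA (fun i => mkEnd R V (fun X => (eta X : R) *: A i xi))).
    * by move=> X i j; rewrite !mE !gZl Hskew mulrN.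
    * move=> X i; exists (- (eta X : R) * g (Axi xi) (tnth e i)).
      have -> : (\sum_(j < n.*2) coord e j (phi (tnth e i)) *:
                  mkEnd R V (fun X => (eta X : R) *: A j xi)) X
          = (eta X : R) *: ((\sum_(j < n.*2) coord e j (phi (tnth e i)) *: A j) xi).
        rewrite !sum_lfunE scaler_sumr; apply: eq_bigr => j _.
        by rewrite !scale_lfunE mE !scalerA mulrC.
      by rewrite Hphi mE [phi (_ *: _)]linearZ /= scalerDr !scalerN scalerA mulNr scaleNr.
    * move=> X Y Z; rewrite /p3 /= HF h_h eta_h mul0r addr0 mulr_sumr.
      by apply: eq_bigr => i _; rewrite mE gZl g_h_r; ring.
  + have mE : forall X, mkEnd R V (fun X => (eta X : R) *: Axi xi) X = (eta X : R) *: Axi xi.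
      by move=> X; exact: (@mkEndE R V _ (scL (Axi xi)) X).
    apply: (inF_typeB (mkEnd R V (fun X => (eta X : R) *: Axi xi))).
    * by move=> X; rewrite mE memv_ker etaZ HAxi0 mulr0.
    * move=> X Y Z; rewrite /p4 /= !(Fxi2 _ _ _ HF) !mE !gZl !phi_h; ring.
- move=> k F [A [Axi [_ HF]]] X Y Z.
  case: k => [[|[|[|[|k]]]] Hk] //=; rewrite /pr /=;
  rewrite /p1 /p2 /p3 /p4 /= ?h_h ?eta_h ?h_xi ?etaxi ?(F0X _ _ _ HF) ?(FX0 _ _ _ HF)
    ?(FXY0 _ _ _ HF); ring.
- move=> F [A [Axi [[_ _ _ Heta _] HF]]] X Y Z.
  rewrite /p1 /p2 /p3 /p4 /=.
  rewrite (FX _ _ _ HF X Y Z) (FY _ _ _ HF xi Y Z) (FY _ _ _ HF (h X) Y Z).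
  rewrite (FZ _ _ _ HF xi xi Z) (FZ _ _ _ HF xi (h Y) Z) (FZ _ _ _ HF (h X) xi Z).
  rewrite (FZ _ _ _ HF (h X) (h Y) Z) ?h_h.
  rewrite !(Fxi2 _ _ _ HF) !(Fxi3 _ _ _ Heta HF) !gphixi !phi_h; ring.
- move=> k l F + [A [Axi [_ HF]]] X Y Z.
  case: k => [[|[|[|[|k]]]] Hk] //=; case: l => [[|[|[|[|l]]]] Hl] //= _; rewrite /pr /=;
  rewrite /p1 /p2 /p3 /p4 /= ?h_h ?eta_h ?h_xi ?etaxi ?(F0X _ _ _ HF) ?(FX0 _ _ _ HF)
    ?(FXY0 _ _ _ HF); ring.
- move=> a ainv Hai Hia [Hphia Haxi Heta_a Hga] k F _ X Y Z.
  have ainvxi : ainv xi = xi by rewrite -{1}Haxi Hia.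
  have etainv : forall X, (eta (ainv X) : R) = eta X.
    by move=> W; rewrite -{2}(Hai W) Heta_a.
  have hainv : forall X, ainv (h X) = h (ainv X).
    by move=> W; rewrite /hproj linearB linearZ /= ainvxi etainv.
  case: k => [[|[|[|[|k]]]] Hk] //=; rewrite /pr /=;
  by rewrite /lam /p1 /p2 /p3 /p4 /= ?hainv ?etainv ?ainvxi.
Qed.
End Main.

Theorem lemma2p1 (R : realType) (V : vectType R) (n : nat)
  (phi : 'End(V)) (xi : V) (eta : 'Hom(V, R^o)) (g : V -> V -> R)
  (e : (n.*2).-tuple V) :
  structure_ok n phi xi eta ->
  metric_ok phi eta g ->
  basis_of (lker eta) e ->
  [/\ (* each p_k maps F into F *)
      (forall (k : 'I_4) F, inF phi xi eta g e F ->
         inF phi xi eta g e (pr xi eta k F)),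
      (* (i) idempotence *)
      (forall (k : 'I_4) F, inF phi xi eta g e F -> forall X Y Z,
         pr xi eta k (pr xi eta k F) X Y Z = pr xi eta k F X Y Z),
      (* (ii) p1 + p2 + p3 + p4 = id *)
      (forall F, inF phi xi eta g e F -> forall X Y Z,
         p1 xi eta F X Y Z + p2 xi eta F X Y Z + p3 xi eta F X Y Z
           + p4 xi eta F X Y Z = F X Y Z),
      (* (iii) p_i o p_j = 0 for i <> j *)
      (forall (k l : 'I_4) F, k != l -> inF phi xi eta g e F ->
         forall X Y Z, pr xi eta k (pr xi eta l F) X Y Z = 0) &
      (* G-equivariance *)
      (forall (a ainv : 'End(V)),
         (forall X, a (ainv X) = X) -> (forall X, ainv (a X) = X) ->
         inG phi xi eta g a ->
         forall (k : 'I_4) F, inF phi xi eta g e F -> forall X Y Z,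
           pr xi eta k (lam ainv F) X Y Z = lam ainv (pr xi eta k F) X Y Z)].
Proof.
move=> [[_ H1 H2 H3 H4] _] [G1 G2 _ G4] Hb.
by apply: main_sec.
Qed.
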